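(* Let $\alpha$ be a normalized, right-continuous dynamic coherent acceptability index and $(\rho^x)_{x\in(0,\infty)}$ the corresponding family of dynamic coherent risk measures. Assume that for each $x>0$ the DCRM $\rho^x$ is strongly time consistent, and that all one-step risk measures $\rho^x_{t,t+1}$ are identical across nodes in the sense of condition (I) of the context. Then, in the market model of the context (short-selling constraints), the maximal acceptability is independent of wealth, time and state: $\alpha^*_t(V_t;\omega)=\alpha^*_0(1)$ for all $t\in\{0,\dots,T-1\}$, all $\omega\in\Omega$ and all strictly positive $V_t\in L_t$.
   Context: Setting: $\mathcal T=\{0,\dots,T\}$, finite filtered probability space $(\Omega,\mathcal F,(\mathcal F_t)_{t\in\mathcal T},\mathbb P)$ with $\mathbb P$ of full support and $\mathcal F_0$ trivial; $\mathcal P_t$ is the partition of $\Omega$ generating $\mathcal F_t$; $L_t$ denotes $\mathcal F_t$-measurable random variables; $\mathbb D$ is the set of adapted real processes $D=(D_t)_{t=0}^T$ (cash flows); $\mathbb 1_{\{s\}}$ denotes the process equal to $1$ at time $s$ and $0$ otherwise, and $\mathbb 1_A$ the indicator of an event. A dynamic coherent acceptability index (DCAI) is $\alpha:\mathcal T\times\mathbb D\times\Omega\to[0,\infty]$ such that for all $t$, $D,D'\in\mathbb D$, $A\in\mathcal F_t$: (A1) $\alpha_t(D)$ is $\mathcal F_t$-measurable; (A2) if $\mathbb 1_AD_s=\mathbb 1_AD'_s$ for all $s\ge t$ then $\mathbb 1_A\alpha_t(D)=\mathbb 1_A\alpha_t(D')$; (A3) if $D_s\ge D'_s$ for all $s\ge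 t$ then $\alpha_t(D)\ge\alpha_t(D')$; (A4) $\alpha_t(\lambda D)=\alpha_t(D)$ for $\lambda\in L_t$, $\lambda>0$; (A5) $\alpha_t(\lambda D+(1-\lambda)D')\ge\min\{\alpha_t(D),\alpha_t(D')\}$ for $0\le\lambda\le1$, $\lambda\in L_t$; (A6) $\alpha_t(D+m\mathbb 1_{\{t\}})=\alpha_t(D+m\mathbb 1_{\{s\}})$ for $m\in L_t$, $s\ge t$; (A7) if $D_t\ge0\ge D'_t$ and there is $m\in L_t$ with $\alpha_{t+1}(D)\ge m\ge\alpha_{t+1}(D')$ then $\alpha_t(D)\ge m\ge\alpha_t(D')$. It is normalized if for all $t,\omega$ there are $D,D'$ with $\alpha_t(D,\omega)=\infty$, $\alpha_t(D',\omega)=0$; right-continuous if $\lim_{c\to0^+}\alpha_t(D+c\mathbb 1_{\{t\}},\omega)=\alpha_t(D,\omega)$. A dynamic coherent risk measure (DCRM) is $\rho:\mathcal T\times\mathbb D\times\Omega\to\mathbb R$ with (R1) adaptedness; (R2) independence of the past (as A2); (R3) $D_s\ge D'_s\ \forall s\ge t\Rightarrow\rho_t(D)\le\rho_t(D')$; (R4) $\rho_t(\lambda D)=\lambda\rho_t(D)$, $\lambda\in L_t$, $\lambda>0$; (R5) subadditivity; (R6) $\rho_t(D+m\mathbb 1_{\{s\}})=\rho_t(D)-m$ for $m\in L_t$, $s\ge t$; (R7) $\mathbb 1_A(\min_{\omega\in A}\rho_{t+1}(D,\omega)-D_t)\le\mathbb 1_A\rho_t(D)\le\mathbb 1_A(\max_{\omega\in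 A}\rho_{t+1}(D,\omega)-D_t)$ for $A\in\mathcal F_t$. The family corresponding to $\alpha$ is $\rho^x_t(D,\omega):=\inf\{c\in\mathbb R:\alpha_t(D+c\mathbb 1_{\{t\}},\omega)\ge x\}$, $x>0$; it is an increasing left-continuous family of DCRMs with $\alpha_t(D,\omega)=\sup\{x>0:\rho^x_t(D,\omega)\le0\}$. A DCRM is strongly time consistent if for $D,D'$ and $t<T$: $D_t=D'_t$ and $\rho_{t+1}(D)=\rho_{t+1}(D')$ imply $\rho_t(D)=\rho_t(D')$ (equivalently $\rho_t(D)=\rho_t(-\rho_{t+1}(D)\mathbb 1_{\{t+1\}})-D_t$). One-step risk measures: $\rho^x_{t,t+1}(Z,\omega):=\rho^x_t(Z\mathbb 1_{\{t+1\}})(\omega)$ for $\mathcal F_{t+1}$-measurable $Z$. Condition (I): for all $t,s$, $\Omega_t\in\mathcal P_t$, $\Omega_s\in\mathcal P_s$, $\rho^x_{t,t+1}(D_{t+1},\omega)=\rho^x_{s,s+1}(D'_{s+1},\omega')$ for all $\omega\in\Omega_t$, $\omega'\in\Omega_s$ and all $D,D'$ such that $\mathbb 1_{\Omega_t}D_{t+1}$ and $\mathbb 1_{\Omega_s}D'_{s+1}$ have the same distribution and are zero outside $\Omega_t$ resp. $\Omega_s$. Market: $d$ assets with strictly positive gross returns $R_{s+1}\in\mathbb R^d$, $s=0,\dots,T-1$, i.i.d., generating the filtration. For $\mathcal F_t$-measurable wealth $V_t>0$, $\mathcal H_t^+(V_t)$ is the set of adapted $(h_s)_{s=t}^{T-1}$,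 $h_s\in\mathbb R^d_+$, with $\mathbf 1^\top h_s=V_s$, $V_{s+1}=R_{s+1}^\top h_s$. The dividend stream of $h$ is $D_s(h)=V_s-V_{s-1}$, and $D^{[t+1,T]}(h):=(0,\dots,0,D_{t+1}(h),\dots,D_T(h))$. Maximal acceptability: $\alpha^*_t(V_t;\omega):=\sup_{h\in\mathcal H^+_t(V_t)}\alpha_t(D^{[t+1,T]}(h);\omega)$. *)

(* Defs.v *)
From HB Require Import structures.
From mathcomp Require Import all_boot all_order all_algebra.
From mathcomp Require Import all_classical all_reals.
From mathcomp Require Import topology normedtype ereal.
Set Implicit Arguments. Unset Strict Implicit. Unset Printing Implicit Defensive.
Import Order.TTheory GRing.Theory Num.Theory.
Local Open Scope ring_scope.
Local Open Scope classical_set_scope.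

Section Defs.
Context {R : realType} {Omega : finType} {d : nat}.

(* Gross returns R_1, ..., R_T : Ret s w is the row vector R_s(w) in R^d. *)
Variable Ret : nat -> Omega -> 'rV[R]_d.

(* Processes (cash flows) D = (D_t)_t; only indices 0..T matter. *)
Definition proc := nat -> Omega -> R.

(* F_t = sigma(R_1,...,R_t): X is F_t-measurable iff X depends only on
   (R_1,...,R_t).  In particular F_0 is trivial. *)
Definition meas (t : nat) {U : Type} (X : Omega -> U) : Prop :=
  forall w w', (forall s, (1 <= s <= t)%N -> Ret s w = Ret s w') -> X w = X w'.

Definition atom (t : nat) (w0 : Omega) : pred Omega :=
  fun w => [forall s : 'I_t, Ret s.+1 w == Ret s.+1 w0].

Definition adapted (T : nat) (D : proc) : Prop :=
  forall t, (t <= T)%N -> meas t (D t).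

Definition plus_at (D : proc) (m : Omega -> R) (s : nat) : proc :=
  fun u w => D u w + (if u == s then m w else 0).
Definition single_at (Z : Omega -> R) (s : nat) : proc :=
  fun u w => if u == s then Z w else 0.
Definition scale (l : Omega -> R) (D : proc) : proc := fun u w => l w * D u w.
Definition comb (l : Omega -> R) (D D' : proc) : proc :=
  fun u w => l w * D u w + (1 - l w) * D' u w.

Variable T : nat.

Record is_DCAI (alpha : nat -> proc -> Omega -> \bar R) : Prop := {
  dcai_range : forall t D w, (t <= T)%N -> adapted T D -> (0 <= alpha t D w)%E;
  dcai_A1 : forall t D, (t <= T)%N -> adapted T D -> meas t (alpha t D);
  dcai_A2 : forall t D D' (A : pred Omega), (t <= T)%N -> adapted T D ->
    adapted T D' -> meas t A ->
    (forall s w, (t <= s <= T)%N -> A w -> D s w = D' s w) ->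
    forall w, A w -> alpha t D w = alpha t D' w;
  dcai_A3 : forall t D D', (t <= T)%N -> adapted T D -> adapted T D' ->
    (forall s w, (t <= s <= T)%N -> D' s w <= D s w) ->
    forall w, (alpha t D' w <= alpha t D w)%E;
  dcai_A4 : forall t D (l : Omega -> R), (t <= T)%N -> adapted T D ->
    meas t l -> (forall w, 0 < l w) ->
    forall w, alpha t (scale l D) w = alpha t D w;
  dcai_A5 : forall t D D' (l : Omega -> R), (t <= T)%N -> adapted T D ->
    adapted T D' -> meas t l -> (forall w, 0 <= l w <= 1) ->
    forall w, (Order.min (alpha t D w) (alpha t D' w) <= alpha t (comb l D D') w)%E;
  dcai_A6 : forall t s D (m : Omega -> R), (t <= s <= T)%N -> adapted T D ->
    meas t m -> forall w, alpha t (plus_at D m t) w = alpha t (plus_at D m s) w;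
  dcai_A7 : forall t D D' (m : Omega -> R), (t < T)%N -> adapted T D ->
    adapted T D' -> meas t m ->
    (forall w, D' t w <= 0 <= D t w) ->
    (forall w, (alpha t.+1 D' w <= (m w)%:E <= alpha t.+1 D w)%E) ->
    forall w, (alpha t D' w <= (m w)%:E <= alpha t D w)%E
}.

Definition normalized (alpha : nat -> proc -> Omega -> \bar R) : Prop :=
  forall t w, (t <= T)%N -> exists D D', adapted T D /\ adapted T D' /\
    alpha t D w = +oo%E /\ alpha t D' w = 0%E.

Definition right_continuous (alpha : nat -> proc -> Omega -> \bar R) : Prop :=
  forall t D w, (t <= T)%N -> adapted T D ->
    (fun c : R => alpha t (plus_at D (fun _ => c) t) w) @ (0 : R)^'+
      --> alpha t D w.

Definition rho (alpha : nat -> proc -> Omega -> \bar R) (x : R)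
    (t : nat) (D : proc) (w : Omega) : \bar R :=
  ereal_inf [set c%:E | c in [set c : R |
              (x%:E <= alpha t (plus_at D (fun _ => c) t) w)%E]].

Definition one_step (alpha : nat -> proc -> Omega -> \bar R) (x : R)
    (t : nat) (Z : Omega -> R) (w : Omega) : \bar R :=
  rho alpha x t (single_at Z t.+1) w.

Definition strongly_time_consistent (r : nat -> proc -> Omega -> \bar R) : Prop :=
  forall t D D', (t < T)%N -> adapted T D -> adapted T D' ->
    (forall w, D t w = D' t w) ->
    (forall w, r t.+1 D w = r t.+1 D' w) ->
    forall w, r t D w = r t D' w.

Variable P : Omega -> R.

Definition prob (A : pred Omega) : R := \sum_(w | A w) P w.

(* Condition (I); "same distribution" is read as equality of the
   distributions under P conditioned on the respective nodes. *)
Definition condition_I (r1 : nat -> (Omega -> R) -> Omega -> \bar R) : Prop :=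
  forall t s (w0 w0' : Omega) (D D' : proc), (t < T)%N -> (s < T)%N ->
    adapted T D -> adapted T D' ->
    (forall w, ~~ atom t w0 w -> D t.+1 w = 0) ->
    (forall w, ~~ atom s w0' w -> D' s.+1 w = 0) ->
    (forall v : R,
       prob (fun w => atom t w0 w && (D t.+1 w == v)) / prob (atom t w0) =
       prob (fun w => atom s w0' w && (D' s.+1 w == v)) / prob (atom s w0')) ->
    forall w w', atom t w0 w -> atom s w0' w' ->
      r1 t (D t.+1) w = r1 s (D' s.+1) w'.

Definition iid_returns : Prop :=
  (forall s, (1 <= s <= T)%N -> forall v,
     prob (fun w => Ret s w == v) = prob (fun w => Ret 1 w == v)) /\
  (forall v : nat -> 'rV[R]_d,
     prob (fun w => [forall s : 'I_T, Ret s.+1 w == v s.+1]) =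
     \prod_(s < T) prob (fun w => Ret s.+1 w == v s.+1)).

(* Strategies h = (h_s)_{s=t}^{T-1}, h_s in R^d (row vectors). *)
Definition wealth (t : nat) (V : Omega -> R) (h : nat -> Omega -> 'rV[R]_d)
    (s : nat) (w : Omega) : R :=
  if (s <= t)%N then V w else \sum_(i < d) Ret s w 0 i * h s.-1 w 0 i.

Definition admissible (t : nat) (V : Omega -> R)
    (h : nat -> Omega -> 'rV[R]_d) : Prop :=
  forall s, (t <= s < T)%N ->
    meas s (h s) /\ (forall w i, 0 <= h s w 0 i) /\
    (forall w, \sum_(i < d) h s w 0 i = wealth t V h s w).

Definition dividends (t : nat) (V : Omega -> R) (h : nat -> Omega -> 'rV[R]_d)
    : proc :=
  fun s w => if (t < s <= T)%N then wealth t V h s w - wealth t V h s.-1 w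
             else 0.

Definition max_acc (alpha : nat -> proc -> Omega -> \bar R) (t : nat)
    (V : Omega -> R) (w : Omega) : \bar R :=
  ereal_sup [set alpha t (dividends t V h) w | h in [set h | admissible t V h]].

End Defs.

(* Main.v *)
Require Import Defs.
From HB Require Import structures.
From mathcomp Require Import all_boot all_order all_algebra.
From mathcomp Require Import all_classical all_reals.
From mathcomp Require Import topology normedtype ereal.
From mathcomp Require Import ring lra.
Import Order.TTheory GRing.Theory Num.Theory.
Local Open Scope ring_scope.

Section Basic.
Variables (R : realType) (Omega : finType) (d : nat) (Ret : nat -> Omega -> 'rV[R]_d).

Lemma meas_mono s u {U} (X : Omega -> U) : (s <= u)%N -> meas Ret s X -> meas Ret u X.
Proof. move=> su H w w' E; apply: H => s' /andP[h1 h2]; apply: E; rewrite h1 /=; exact: leq_trans h2 su. Qed.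

Lemma meas_const t {U} (c : U) : meas Ret t (fun _ : Omega => c).
Proof. by []. Qed.

Lemma meas_comp t {U V} (f : U -> V) (X : Omega -> U) : meas Ret t X -> meas Ret t (fun w => f (X w)).
Proof. by move=> H w w' E; rewrite (H w w' E). Qed.

Lemma meas_comp2 t {U1 U2 V} (f : U1 -> U2 -> V) (X : Omega -> U1) (Y : Omega -> U2) :
  meas Ret t X -> meas Ret t Y -> meas Ret t (fun w => f (X w) (Y w)).
Proof. by move=> H1 H2 w w' E; rewrite (H1 w w' E) (H2 w w' E). Qed.

Lemma meas_Ret s : (1 <= s)%N -> meas Ret s (Ret s).
Proof. by move=> s1 w w' E; apply: E; rewrite s1 leqnn. Qed.

Lemma meas_atom t w0 : meas Ret t (atom Ret t w0).
Proof.
move=> w w' E; rewrite /atom; apply: eq_forallb => i.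
by rewrite (E i.+1) // ltn_ord.
Qed.

Lemma atom_meas t {U} (X : Omega -> U) w0 w : meas Ret t X -> atom Ret t w0 w -> X w = X w0.
Proof.
move=> H /forallP A; apply: H => s /andP[s1 st].
have st' : (s.-1 < t)%N by rewrite prednK.
have := A (Ordinal st') => /eqP /=.
by rewrite prednK.
Qed.

Lemma atom_refl t w : atom Ret t w w.
Proof. by apply/forallP => i. Qed.

Lemma atom0 w0 w : atom Ret 0 w0 w.
Proof. by apply/forallP => -[]. Qed.

Lemma adapted_plus T D (m : Omega -> R) s : adapted Ret T D -> meas Ret s m ->
  adapted Ret T (plus_at D m s).
Proof.
move=> HD Hm u uT; rewrite /plus_at; case: (eqVneq u s) => [e|ne].
  by rewrite e; apply: (meas_comp2 _ +%R) => //; apply: HD; rewrite -e.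
by apply: (meas_comp2 _ +%R) => //; apply: HD.
Qed.

Lemma adapted_plusc T D (c : R) s : adapted Ret T D -> adapted Ret T (plus_at D (fun _ => c) s).
Proof. by move=> HD; apply: adapted_plus. Qed.

Lemma adapted_single T (Z : Omega -> R) s : meas Ret s Z -> adapted Ret T (single_at Z s).
Proof. by move=> HZ u uT; rewrite /single_at; case: (eqVneq u s) => [->|ne]. Qed.

Lemma adapted_scale T D (l : Omega -> R) : adapted Ret T D -> (forall u, meas Ret u l) -> adapted Ret T (scale l D).
Proof. by move=> HD Hl u uT; apply: (meas_comp2 _ *%R) => //; apply: HD. Qed.

Lemma fin_bound (Q : Omega -> R -> Prop) : (forall w, exists c, Q w c) ->
  (forall w c c', Q w c -> c <= c' -> Q w c') -> exists c, forall w, Q w c.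
Proof.
move=> H1 H2; have [f Hf] := boolp.choice H1.
exists (\sum_w `|f w|) => w; apply: (H2 _ (f w)) => //.
rewrite (bigD1 w) //=; have := ler_norm (f w).
have : 0 <= \sum_(i | i != w) `|f i| by apply: sumr_ge0.
lra.
Qed.

Lemma fin_bound_low (Q : Omega -> R -> Prop) : (forall w, exists c, Q w c) ->
  (forall w c c', Q w c -> c' <= c -> Q w c') -> exists c, forall w, Q w c.
Proof.
move=> H1 H2.
have H1' : forall w, exists c, Q w (- c).
  by move=> w; have [c Hc] := H1 w; exists (- c); rewrite opprK.
have H2' : forall w c c', Q w (- c) -> c <= c' -> Q w (- c').
  by move=> w c c' Hq cc; apply: H2 Hq _; lra.
have [c Hc] := fin_bound (fun w c => Q w (- c)) H1' H2'.
by exists (- c).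
Qed.

End Basic.
Arguments meas_mono {R Omega d Ret s u U X}.
Arguments meas_const {R Omega d Ret t U c}.
Arguments meas_comp {R Omega d Ret t U V} f {X}.
Arguments meas_comp2 {R Omega d Ret t U1 U2 V} f {X Y}.
Arguments meas_Ret {R Omega d Ret s}.
Arguments meas_atom {R Omega d Ret t w0}.
Arguments atom_meas {R Omega d Ret t U X w0 w}.
Arguments atom_refl {R Omega d Ret t w}.
Arguments atom0 {R Omega d Ret w0 w}.
Arguments adapted_plus {R Omega d Ret T D m s}.
Arguments adapted_plusc {R Omega d Ret T D c s}.
Arguments adapted_single {R Omega d Ret T Z s}.
Arguments adapted_scale {R Omega d Ret T D l}.
Arguments fin_bound {R Omega} Q.
Arguments fin_bound_low {R Omega} Q.

Section RR.
Variables (R : realType) (Omega : finType) (d T : nat) (Ret : nat -> Omega -> 'rV[R]_d)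
  (alpha : nat -> @proc R Omega -> Omega -> \bar R).
Local Notation prc := (@proc R Omega).
Local Open Scope classical_set_scope.
Hypothesis HA : is_DCAI Ret T alpha.
Hypothesis Hn : normalized Ret T alpha.
Variable x : R.
Hypothesis x0 : 0 < x.

Definition Sset t (D : prc) w : set R :=
  [set c : R | (x%:E <= alpha t (plus_at D (fun _ => c) t) w)%E].
Definition rr t D w : R := fine (rho alpha x t D w).

Lemma alpha_monoc t D s c c' w : (t <= T)%N -> adapted Ret T D -> c <= c' ->
  (alpha t (plus_at D (fun _ => c) s) w <= alpha t (plus_at D (fun _ => c') s) w)%E.
Proof.
move=> tT HD cc; apply: (dcai_A3 HA) => //; try exact: adapted_plusc.
by move=> u v _; rewrite /plus_at; case: (u == s) => //; lra.
Qed.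

Lemma Sset_up t D w c c' : (t <= T)%N -> adapted Ret T D -> Sset t D w c -> c <= c' ->
  Sset t D w c'.
Proof. by move=> tT HD Hc cc; apply: le_trans Hc _; exact: alpha_monoc. Qed.

Lemma fin_ind k : forall t D, (t + k = T)%N -> adapted Ret T D ->
  (exists c, forall w, (x%:E <= alpha t (plus_at D (fun _ => c) T) w)%E) /\
  (exists c, forall w, (alpha t (plus_at D (fun _ => c) T) w <= 0)%E).
Proof.
elim: k => [|k IH] t D.
  move=> tk HD; rewrite addn0 in tk; have tT : (t <= T)%N by rewrite tk.
  rewrite -tk; split.
    apply: (fin_bound (fun w c => (x%:E <= alpha t (plus_at D (fun _ => c) t) w)%E)).
      move=> w; have [D1 [D0 [H1 [H0 [E1 E0]]]]] := Hn t w tT.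
      exists (\sum_v `|D1 t v - D t v|).
      apply: le_trans (_ : x%:E <= +oo)%E _; first exact: leey.
      rewrite -E1; apply: (dcai_A3 HA) => //; first exact: adapted_plusc.
      move=> s v /andP[h1 h2]; have -> : s = t by apply/eqP; rewrite eqn_leq h1 andbT tk.
      rewrite /plus_at eqxx (bigD1 v) //=.
      have := ler_norm (D1 t v - D t v).
      have : 0 <= \sum_(i | i != v) `|D1 t i - D t i| by apply: sumr_ge0.
      lra.
    by move=> w c c' Hc cc; apply: le_trans Hc _; exact: alpha_monoc.
  apply: (fin_bound_low (fun w c => (alpha t (plus_at D (fun _ => c) t) w <= 0)%E)).
    move=> w; have [D1 [D0 [H1 [H0 [E1 E0]]]]] := Hn t w tT.
    exists (- \sum_v `|D t v - D0 t v|).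
    rewrite -E0; apply: (dcai_A3 HA) => //; first exact: adapted_plusc.
    move=> s v /andP[h1 h2]; have -> : s = t by apply/eqP; rewrite eqn_leq h1 andbT tk.
    rewrite /plus_at eqxx (bigD1 v) //=.
    have := ler_norm (D t v - D0 t v).
    have : 0 <= \sum_(i | i != v) `|D t i - D0 t i| by apply: sumr_ge0.
    lra.
  by move=> w c c' Hc cc; apply: le_trans Hc; exact: alpha_monoc.
move=> tk HD.
have tT : (t < T)%N by rewrite -tk addnS ltnS leq_addr.
have tnT : t != T by rewrite neq_ltn tT.
pose H := fun u w => if u == t then 0 else D u w + (if u == T then D t w else 0).
have HH : adapted Ret T H.
  move=> u uT; rewrite /H; case: (eqVneq u t) => [_|ut]; first exact: meas_const.
  apply: (meas_comp2 +%R); first exact: HD.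
  case: (eqVneq u T) => [->|_]; last exact: meas_const.
  by apply: meas_mono (ltnW tT) _; apply: HD; exact: ltnW.
pose H' := fun u w => if u == t then 0 else D u w.
have HH' : adapted Ret T H'.
  move=> u uT; rewrite /H'; case: (eqVneq u t) => [_|ut]; first exact: meas_const.
  exact: HD.
have key : forall c w, alpha t (plus_at D (fun _ => c) T) w = alpha t (plus_at H (fun _ => c) T) w.
  move=> c w.
  have E1 : plus_at (plus_at H' (fun _ => c) T) (D t) t = plus_at D (fun _ => c) T.
    apply/funext => u; apply/funext => v; rewrite /plus_at /H'.
    case: (eqVneq u t) => [->|ut]; first by rewrite (negbTE tnT); lra.
    lra.
  have E2 : plus_at (plus_at H' (fun _ => c) T) (D t) T = plus_at H (fun _ => c) T.
    apply/funext => u; apply/funext => v; rewrite /plus_at /H' /H.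
    case: (eqVneq u t) => [->|ut]; first by rewrite (negbTE tnT); lra.
    case: (u == T); lra.
  rewrite -E1 -E2; apply: (dcai_A6 HA) => //.
  - by rewrite leqnn ltnW.
  - exact: adapted_plusc.
  - by apply: HD; exact: ltnW.
have e1 : (t.+1 + k = T)%N by rewrite addSnnS.
have [[c1 Hc1] [c0 Hc0]] := IH t.+1 H e1 HH.
have Hhl : forall w, (plus_at H (fun _ => c0) T t w <= 0 <= plus_at H (fun _ => c1) T t w).
  by move=> w; rewrite /plus_at /H eqxx (negbTE tnT) addr0 lexx.
split.
  exists c1 => w; rewrite key.
  have Hm : forall v, (alpha t.+1 (plus_at H (fun _ => c0) T) v <= ((fun _ => x) v)%:E <=
      alpha t.+1 (plus_at H (fun _ => c1) T) v)%E.
    move=> v; rewrite Hc1 andbT; apply: le_trans (Hc0 v) _; rewrite lee_fin; exact: ltW.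
  by have /andP[_ +] := dcai_A7 HA tT (adapted_plusc HH) (adapted_plusc HH) meas_const Hhl Hm w.
exists c0 => w; rewrite key.
have Hm : forall v, (alpha t.+1 (plus_at H (fun _ => c0) T) v <= ((fun _ => 0) v)%:E <=
    alpha t.+1 (plus_at H (fun _ => c1) T) v)%E.
  move=> v; rewrite Hc0 /=; apply: le_trans (Hc1 v); rewrite lee_fin; exact: ltW.
by have /andP[+ _] := dcai_A7 HA tT (adapted_plusc HH) (adapted_plusc HH) meas_const Hhl Hm w.
Qed.

Hypothesis Hrc : right_continuous Ret T alpha.

Lemma fin_t t D : (t <= T)%N -> adapted Ret T D ->
  (exists c, forall w, (x%:E <= alpha t (plus_at D (fun _ => c) T) w)%E) /\
  (exists c, forall w, (alpha t (plus_at D (fun _ => c) T) w <= 0)%E).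
Proof. by move=> tT; apply: (fin_ind (T - t)); rewrite subnKC. Qed.

Lemma alpha_A6T t D c w : (t <= T)%N -> adapted Ret T D ->
  alpha t (plus_at D (fun _ => c) t) w = alpha t (plus_at D (fun _ => c) T) w.
Proof. by move=> tT HD; apply: (dcai_A6 HA) => //; rewrite tT leqnn. Qed.

Lemma rhoE t D w : rho alpha x t D w = ereal_inf [set c%:E | c in Sset t D w].
Proof. by []. Qed.

Lemma rr_props t D w : (t <= T)%N -> adapted Ret T D ->
  [/\ rho alpha x t D w = (rr t D w)%:E, (forall c, Sset t D w c -> rr t D w <= c) &
      (forall e, 0 < e -> Sset t D w (rr t D w + e))].
Proof.
move=> tT HD; have [[c1 H1] [c0 H0]] := fin_t t D tT HD.
have ne : Sset t D w !=set0 by exists c1; rewrite /Sset /= alpha_A6T.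
have lb : has_lbound (Sset t D w).
  exists c0 => c Hc; rewrite leNgt; apply/negP => cc.
  have A := alpha_monoc t D t c c0 w tT HD (ltW cc).
  rewrite [X in (_ <= X)%E]alpha_A6T // in A.
  have := le_trans (le_trans Hc A) (H0 w).
  by rewrite lee_fin leNgt x0.
have E : rho alpha x t D w = (inf (Sset t D w))%:E by rewrite rhoE ereal_inf_EFin.
have Er : rr t D w = inf (Sset t D w) by rewrite /rr E.
rewrite Er; split => //; first exact: ge_inf.
move=> e e0; have [c Hc ce] := inf_adherent e0 (conj ne lb).
by apply: Sset_up Hc _ => //; exact: ltW.
Qed.

Lemma rho_rr t D w : (t <= T)%N -> adapted Ret T D -> rho alpha x t D w = (rr t D w)%:E.
Proof. by move=> tT HD; have [] := rr_props t D w tT HD. Qed.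

Lemma rr_unique t D w y : (t <= T)%N -> adapted Ret T D ->
  (forall c, Sset t D w c -> y <= c) -> (forall e, 0 < e -> Sset t D w (y + e)) ->
  rr t D w = y.
Proof.
move=> tT HD H1 H2; have [_ C1 C2] := rr_props t D w tT HD.
apply/eqP; rewrite eq_le; apply/andP; split; apply/ler_addgt0Pr => e e0.
  exact: C1 (H2 _ e0).
exact: H1 (C2 _ e0).
Qed.

Lemma rr_sets t D D' w w' : Sset t D w = Sset t D' w' -> rr t D w = rr t D' w'.
Proof. by move=> E; rewrite /rr !rhoE E. Qed.

Lemma plus_at0 (D : prc) t : plus_at D (fun _ => 0) t = D.
Proof. by apply/funext => u; apply/funext => v; rewrite /plus_at; case: (u == t); rewrite addr0. Qed.

Lemma rr_local t D D' w : (t <= T)%N -> adapted Ret T D -> adapted Ret T D' ->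
  (forall u v, (t <= u <= T)%N -> atom Ret t w v -> D u v = D' u v) -> rr t D w = rr t D' w.
Proof.
move=> tT HD HD' E; apply: rr_sets; apply/seteqP; split => c /=; rewrite /Sset /=;
  rewrite (dcai_A2 HA (A := atom Ret t w) (D := plus_at D (fun _ => c) t)
    (D' := plus_at D' (fun _ => c) t)) //; try exact: adapted_plusc; try exact: meas_atom;
  try exact: atom_refl.
- by move=> u v uT Av; rewrite /plus_at E.
- by move=> u v uT Av; rewrite /plus_at E.
Qed.

Lemma rr_meas t D : (t <= T)%N -> adapted Ret T D -> meas Ret t (rr t D).
Proof.
move=> tT HD w w' E; apply: rr_sets; apply/seteqP; split => c /=; rewrite /Sset /=;
  by rewrite (dcai_A1 HA tT (adapted_plusc HD) E).
Qed.

Lemma acc_iff t D w : (t <= T)%N -> adapted Ret T D ->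
  (x%:E <= alpha t D w)%E <-> rr t D w <= 0.
Proof.
move=> tT HD; have [_ C1 C2] := rr_props t D w tT HD; split => H.
  by apply: C1; rewrite /Sset /= plus_at0.
have He : forall e, 0 < e -> (x%:E <= alpha t (plus_at D (fun _ => e) t) w)%E.
  by move=> e e0; apply: (Sset_up _ _ _ _ _ tT HD (C2 e e0)); lra.
have := Hrc t D w tT HD.
apply: (closed_cvg (fun y => x%:E <= y)%E) => //; first exact: closed_ereal_le_ereal.
near=> c; apply: He; near: c; exact: nbhs_right_gt.
Unshelve. all: by end_near.
Qed.

Lemma rr_cash t D m w : (t <= T)%N -> adapted Ret T D -> meas Ret t m ->
  rr t (plus_at D m t) w = rr t D w - m w.
Proof.
move=> tT HD Hm.
rewrite (rr_local t (plus_at D m t) (plus_at D (fun _ => m w) t) w) //; first last.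
- by move=> u v _ Av; rewrite /plus_at (atom_meas Hm Av).
- exact: adapted_plusc.
- exact: adapted_plus.
have [_ C1 C2] := rr_props t D w tT HD.
have E : forall c, plus_at (plus_at D (fun _ => m w) t) (fun _ => c) t = plus_at D (fun _ => c + m w) t.
  by move=> c; apply/funext => u; apply/funext => v; rewrite /plus_at; case: (u == t); lra.
apply: rr_unique => //; first exact: adapted_plusc.
  move=> c; rewrite /Sset /= E => /C1; lra.
move=> e e0; rewrite /Sset /= E.
have -> : rr t D w - m w + e + m w = rr t D w + e by lra.
exact: C2.
Qed.

Lemma rr_scale t D lam w : 0 < lam -> (t <= T)%N -> adapted Ret T D ->
  rr t (scale (fun _ => lam) D) w = lam * rr t D w.
Proof.
move=> lam0 tT HD; have [_ C1 C2] := rr_props t D w tT HD.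
have E : forall c, plus_at (scale (fun _ => lam) D) (fun _ => c) t =
    scale (fun _ => lam) (plus_at D (fun _ => c / lam) t).
  move=> c; apply/funext => u; apply/funext => v; rewrite /plus_at /scale.
  case: (u == t); last by rewrite !addr0.
  by rewrite mulrDr; congr (_ + _); rewrite mulrC divfK // gt_eqF.
have A : forall c, alpha t (plus_at (scale (fun _ => lam) D) (fun _ => c) t) w =
    alpha t (plus_at D (fun _ => c / lam) t) w.
  by move=> c; rewrite E (dcai_A4 HA) //; try exact: adapted_plusc; try exact: meas_const.
apply: rr_unique => //; first by apply: adapted_scale => // u; exact: meas_const.
  move=> c; rewrite /Sset /= A => /C1 H.
  have E2 : lam * (c / lam) = c by rewrite mulrC divfK // gt_eqF.
  by rewrite -E2 ler_pM2l.
move=> e e0; rewrite /Sset /= A.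
have -> : (lam * rr t D w + e) / lam = rr t D w + e / lam.
  by rewrite mulrDl mulrC mulrA mulVf ?mul1r // gt_eqF.
by apply: C2; exact: divr_gt0.
Qed.

Lemma rr_mono t D D' w : (t <= T)%N -> adapted Ret T D -> adapted Ret T D' ->
  (forall u v, (t <= u <= T)%N -> D' u v <= D u v) -> rr t D w <= rr t D' w.
Proof.
move=> tT HD HD' Hle; have [_ C1 _] := rr_props t D w tT HD.
have [_ _ C2] := rr_props t D' w tT HD'.
apply/ler_addgt0Pr => e e0; apply: C1; have := C2 e e0; rewrite /Sset /= => H.
apply: le_trans H _; apply: (dcai_A3 HA) => //; try exact: adapted_plusc.
move=> u v uT; rewrite /plus_at; apply: lerD => //; exact: Hle.
Qed.

Lemma rr_zero t w : (t <= T)%N -> rr t (fun _ _ => 0) w = 0.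
Proof.
move=> tT.
have H0 : adapted Ret T (fun _ _ => 0 : R) by move=> u _; exact: meas_const.
have := rr_scale t (fun _ _ => 0) 2 w (ltr0Sn _ 1) tT H0.
have -> : scale (fun _ => 2) (fun _ _ => 0) = (fun (_ : nat) (_ : Omega) => 0 : R).
  by apply/funext => u; apply/funext => v; rewrite /scale mulr0.
lra.
Qed.

End RR.

Section Prob.
Variables (R : realType) (Omega : finType) (d T : nat) (P : Omega -> R)
  (Ret : nat -> Omega -> 'rV[R]_d).
Hypothesis HP1 : \sum_(w : Omega) P w = 1.
Hypothesis Hiid : iid_returns Ret T P.

Lemma partition_prob {X : eqType} (F : Omega -> X) (L : seq X) (A : pred Omega) :
  uniq L -> (forall w, F w \in L) ->
  prob P A = \sum_(u <- L) prob P (fun w => A w && (F w == u)).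
Proof.
move=> uL FL; rewrite /prob.
rewrite (eq_bigr (fun u => \sum_(w | A w) (if F w == u then P w else 0))); last first.
  by move=> u _; rewrite big_mkcondr.
rewrite exchange_big /=; apply: eq_bigr => w Aw.
rewrite (bigD1_seq (F w)) //= eqxx big1 ?addr0 // => u.
by rewrite eq_sym => /negbTE ->.
Qed.

Lemma push {X : eqType} (F : Omega -> X) (L : seq X) (A : pred Omega) (E : pred X) :
  uniq L -> (forall w, F w \in L) ->
  prob P (fun w => A w && E (F w)) =
  \sum_(u <- L) (if E u then prob P (fun w => A w && (F w == u)) else 0).
Proof.
move=> uL FL; rewrite (partition_prob F L) //; apply: eq_bigr => u _.
case: ifP => Eu.
  by apply: eq_bigl => w /=; case: eqP => [->|]; rewrite ?Eu ?andbT ?andbF.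
rewrite /prob big_pred0 // => w /=; case: eqP => [->|]; rewrite ?Eu ?andbF //.
Qed.

Definition vals {X : eqType} (F : Omega -> X) : seq X := undup [seq F w | w <- enum Omega].

Lemma vals_uniq {X : eqType} (F : Omega -> X) : uniq (vals F).
Proof. exact: undup_uniq. Qed.

Lemma vals_mem {X : eqType} (F : Omega -> X) w : F w \in vals F.
Proof. by rewrite mem_undup; apply: map_f; rewrite mem_enum. Qed.

Lemma prob_true : prob P (fun _ => true) = 1.
Proof. by []. Qed.

Lemma sum_prob_vals {X : eqType} (F : Omega -> X) :
  \sum_(u <- vals F) prob P (fun w => F w == u) = 1.
Proof.
by rewrite -prob_true (partition_prob F (vals F) (fun _ => true)) //; [exact: vals_uniq | exact: vals_mem].
Qed.

Definition upd (v : nat -> 'rV[R]_d) (n : nat) (u : 'rV[R]_d) := fun k => if k == n then u else v k.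

Definition Ev (K : {set 'I_T}) (v : nat -> 'rV[R]_d) : pred Omega :=
  fun w => [forall j : 'I_T, (j \in K) ==> (Ret j.+1 w == v j.+1)].

Lemma Ev_prod n : forall K v, #|~: K| = n ->
  prob P (Ev K v) = \prod_(j in K) prob P (fun w => Ret j.+1 w == v j.+1).
Proof.
elim: n => [|n IH] K v.
  move=> /cards0_eq H; have -> : K = finset.setT.
    apply/finset.setP => i; rewrite finset.in_setT.
    have : (i \in ~: K) = false by rewrite H finset.in_set0.
    by rewrite finset.in_setC => /negbFE ->.
  have := Hiid.2 v; rewrite /Ev => E.
  rewrite (_ : (fun w => [forall j : 'I_T, (j \in (finset.setT : {set 'I_T})) ==> (Ret j.+1 w == v j.+1)]) =
     (fun w => [forall s : 'I_T, Ret s.+1 w == v s.+1])); last first.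
    by apply/funext => w; apply: eq_forallb => j; rewrite finset.in_setT.
  by rewrite E; apply: eq_bigl => j; rewrite finset.in_setT.
move=> Hc.
have [j Hj] : exists j, j \in ~: K by apply/set0Pn; rewrite -card_gt0 Hc.
have jK : j \notin K by rewrite -finset.in_setC.
have Hc' : #|~: (j |: K)| = n.
  have E : ~: (j |: K) = (~: K) :\ j by apply/finset.setP => i; rewrite !inE negb_or andbC.
  by rewrite E; move: Hc; rewrite (cardsD1 j) Hj add1n => -[].
rewrite (partition_prob (Ret j.+1) (vals (Ret j.+1))) //; [|exact: vals_uniq|exact: vals_mem].
rewrite (eq_bigr (fun u => prob P (fun w => Ret j.+1 w == u) *
    \prod_(i in K) prob P (fun w => Ret i.+1 w == v i.+1))).
  by rewrite -big_distrl /= sum_prob_vals mul1r.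
move=> u _.
have -> : (fun w => Ev K v w && (Ret j.+1 w == u)) = Ev (j |: K) (upd v j.+1 u).
  apply/funext => w; rewrite /Ev /upd; apply/andP/forallP.
    move=> [/forallP H1 H2] i; apply/implyP; rewrite in_setU1.
    case: (eqVneq i j) => [->|ij] /=; first by rewrite eqxx.
    have ij' : (i.+1 == j.+1) = false by rewrite eqSS; exact: negbTE ij.
    rewrite ij' => iK; exact: (implyP (H1 i) iK).
  move=> H; split.
    apply/forallP => i; apply/implyP => iK.
    have ij : i != j by apply: contraNneq jK => <-.
    have ij' : (i.+1 == j.+1) = false by rewrite eqSS; exact: negbTE ij.
    by have := implyP (H i); rewrite in_setU1 iK orbT ij' => /(_ isT).
  by have := implyP (H j); rewrite in_setU1 eqxx eqxx => /(_ isT).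
rewrite (IH _ _ Hc') (bigD1 j) ?in_setU1 ?eqxx //= /upd eqxx; congr (_ * _).
apply: eq_big => i.
  rewrite in_setU1; case: (eqVneq i j) => [->|ij] /=; first by rewrite (negbTE jK).
  by rewrite andbT.
move=> /andP[_ ij]; have ij' : (i.+1 == j.+1) = false by rewrite eqSS; exact: negbTE ij.
by rewrite ij'.
Qed.

Lemma atom_Ev s w0 : (s <= T)%N ->
  atom Ret s w0 = Ev [set j : 'I_T | (j < s)%N] (fun k => Ret k w0).
Proof.
move=> sT; apply/funext => w; rewrite /atom /Ev; apply/forallP/forallP => H j.
  by apply/implyP; rewrite inE => js; exact: (H (Ordinal js)).
have jT : (j < T)%N := leq_trans (ltn_ord j) sT.
by have := implyP (H (Ordinal jT)); rewrite inE /= ltn_ord => /(_ isT).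
Qed.

Lemma prob_atom_R s w0 u : (s < T)%N ->
  prob P (fun w => atom Ret s w0 w && (Ret s.+1 w == u)) =
  prob P (atom Ret s w0) * prob P (fun w => Ret s.+1 w == u).
Proof.
move=> sT; pose j0 := Ordinal sT.
have E1 : (fun w => atom Ret s w0 w && (Ret s.+1 w == u)) =
    Ev [set j : 'I_T | (j < s.+1)%N] (upd (fun k => Ret k w0) s.+1 u).
  apply/funext => w; rewrite /atom /Ev /upd; apply/andP/forallP.
    move=> [/forallP H1 H2] j; apply/implyP; rewrite inE ltnS leq_eqVlt => /orP[/eqP js|js].
      by rewrite js eqxx.
    have -> : (j.+1 == s.+1) = false by rewrite eqSS ltn_eqF.
    exact: (H1 (Ordinal js)).
  move=> H; split; last by have := implyP (H j0); rewrite inE /= ltnSn eqxx => /(_ isT).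
  apply/forallP => i; have iT : (i < T)%N := ltn_trans (ltn_ord i) sT.
  have := implyP (H (Ordinal iT)); rewrite inE /= ltnS ltnW // eqSS ltn_eqF //.
  by move=> /(_ isT).
rewrite E1 (Ev_prod _ _ _ erefl) (bigD1 j0) ?inE //= /upd eqxx mulrC; congr (_ * _).
rewrite (atom_Ev s w0 (ltnW sT)) (Ev_prod _ _ _ erefl).
apply: eq_big => i.
  rewrite !inE ltnS leq_eqVlt; case: (eqVneq i j0) => [->|ij] /=; first by rewrite eqxx ltnn.
  have -> : (nat_of_ord i == s) = false.
    by apply: negbTE; apply: contra ij => /eqP e; apply/eqP/val_inj.
  by rewrite andbT.
move=> /andP[_ ij]; suff -> : (i.+1 == s.+1) = false by [].
rewrite eqSS; apply: negbTE; apply: contra ij => /eqP e; apply/eqP/val_inj.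
by rewrite /= e.
Qed.

Lemma indep s w0 (E : pred 'rV[R]_d) : (s < T)%N ->
  prob P (fun w => atom Ret s w0 w && E (Ret s.+1 w)) =
  prob P (atom Ret s w0) * prob P (fun w => E (Ret s.+1 w)).
Proof.
move=> sT.
rewrite (push (Ret s.+1) (vals (Ret s.+1))); [|exact: vals_uniq|exact: vals_mem].
rewrite (_ : prob P (fun w => E (Ret s.+1 w)) = prob P (fun w => true && E (Ret s.+1 w))) //.
rewrite (push (Ret s.+1) (vals (Ret s.+1))); [|exact: vals_uniq|exact: vals_mem].
rewrite big_distrr /=; apply: eq_bigr => u _; case: (E u); last by rewrite mulr0.
exact: prob_atom_R.
Qed.

Lemma ident s (E : pred 'rV[R]_d) : (1 <= s <= T)%N ->
  prob P (fun w => E (Ret s w)) = prob P (fun w => E (Ret 1 w)).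
Proof.
move=> sT; pose L := undup (vals (Ret s) ++ vals (Ret 1)).
have uL : uniq L by exact: undup_uniq.
have mL : forall k w, (k == s) || (k == 1%N) -> Ret k w \in L.
  move=> k w /orP[] /eqP ->; rewrite mem_undup mem_cat vals_mem ?orbT //.
rewrite (_ : prob P (fun w => E (Ret s w)) = prob P (fun w => true && E (Ret s w))) //.
rewrite (_ : prob P (fun w => E (Ret 1 w)) = prob P (fun w => true && E (Ret 1 w))) //.
rewrite (push (Ret s) L) //; last by move=> w; apply: mL; rewrite eqxx.
rewrite (push (Ret 1) L) //; last by move=> w; apply: mL; rewrite eqxx orbT.
apply: eq_bigr => u _; case: (E u) => //; exact: (Hiid.1 s sT u).
Qed.

Hypothesis HP : forall w, 0 < P w.

Lemma prob_atom_gt0 s w0 : 0 < prob P (atom Ret s w0).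
Proof.
rewrite /prob (bigD1 w0) ?atom_refl //=; have := HP w0.
have : 0 <= \sum_(i | atom Ret s w0 i && (i != w0)) P i by apply: sumr_ge0 => i _; exact: ltW.
lra.
Qed.

Lemma cond_dist s w0 w0' (f : 'rV[R]_d -> R) v : (s < T)%N ->
  prob P (fun w => atom Ret s w0 w && (f (Ret s.+1 w) == v)) / prob P (atom Ret s w0) =
  prob P (fun w => atom Ret 0 w0' w && (f (Ret 1 w) == v)) / prob P (atom Ret 0 w0').
Proof.
move=> sT.
rewrite (indep s w0 (fun r => f r == v) sT) mulrC mulKf; last by rewrite gt_eqF // prob_atom_gt0.
rewrite (ident s.+1 (fun r => f r == v)); last by rewrite ltnS /= sT.
have -> : atom Ret 0 w0' = (fun _ => true) by apply/funext => w; exact: atom0.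
by rewrite prob_true divr1.
Qed.

End Prob.

Section Wealth.
Variables (R : realType) (Omega : finType) (d T : nat) (Ret : nat -> Omega -> 'rV[R]_d).
Hypothesis Hret : forall s w (i : 'I_d), (1 <= s <= T)%N -> 0 < Ret s w 0 i.
Variables (t : nat) (V : Omega -> R) (h : nat -> Omega -> 'rV[R]_d).
Hypothesis HV : meas Ret t V.
Hypothesis HVp : forall w, 0 < V w.
Hypothesis Hadm : admissible Ret T t V h.

Local Notation W := (wealth Ret t V h).

Lemma W_t : W t = V.
Proof. by apply/funext => w; rewrite /wealth leqnn. Qed.

Lemma W_S u w : (t <= u)%N -> W u.+1 w = \sum_(i < d) Ret u.+1 w 0 i * h u w 0 i.
Proof. by move=> tu; rewrite /wealth ltnNge tu. Qed.

Lemma W_meas u : (t <= u <= T)%N -> meas Ret u (W u).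
Proof.
case/andP; case: u => [|u] tu uT.
  by move: tu; rewrite leqn0 => /eqP <-; rewrite W_t.
case: (ltnP t u.+1) => tu'.
  have tu2 : (t <= u)%N by rewrite -ltnS.
  have tuT : (t <= u < T)%N by rewrite tu2 uT.
  have [Hm _] := Hadm u tuT.
  move=> w w' E; rewrite !W_S //; apply: eq_bigr => i _.
  rewrite (meas_Ret (isT : (1 <= u.+1)%N) w w' E) (meas_mono (leqnSn u) Hm w w' E) //.
have -> : u.+1 = t by apply/eqP; rewrite eqn_leq tu' tu.
by rewrite W_t.
Qed.

Lemma W_pos u : (t <= u <= T)%N -> forall w, 0 < W u w.
Proof.
case/andP => tu; elim: u tu => [|u IH] tu uT w.
  by move: tu; rewrite leqn0 => /eqP <-; rewrite W_t.
case: (ltnP t u.+1) => tu'; last first.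
  have -> : u.+1 = t by apply/eqP; rewrite eqn_leq tu' tu.
  by rewrite W_t.
have tu2 : (t <= u)%N by rewrite -ltnS.
have tuT : (t <= u < T)%N by rewrite tu2 uT.
have [_ [Hnn Hsum]] := Hadm u tuT.
rewrite W_S //; rewrite lt_def; apply/andP; split; last first.
  by apply: sumr_ge0 => i _; apply: mulr_ge0; [apply: ltW; apply: Hret; rewrite uT | exact: Hnn].
apply/eqP => S0.
have Hnn' : forall j : 'I_d, true -> 0 <= Ret u.+1 w 0 j * h u w 0 j.
  by move=> j _; apply: mulr_ge0; [apply: ltW; apply: Hret; rewrite uT | exact: Hnn].
have Hz : forall i : 'I_d, h u w 0 i = 0.
  move=> i; have := @psumr_eq0P _ _ _ _ Hnn' S0 i isT.
  move=> /eqP; rewrite mulf_eq0 => /orP[/eqP R0|/eqP //].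
  by have := Hret u.+1 w i; rewrite uT R0 ltxx => /(_ isT).
have := IH tu2 (ltnW uT) w; rewrite -Hsum big1 ?ltxx // => j _; exact: Hz j.
Qed.

End Wealth.
Lemma andP_intro (a b : bool) : a -> b -> a && b. Proof. by move=> -> ->. Qed.

Section Main.
Variables (R : realType) (Omega : finType) (d T : nat) (P : Omega -> R)
  (Ret : nat -> Omega -> 'rV[R]_d) (alpha : nat -> @proc R Omega -> Omega -> \bar R).
Hypothesis HP : forall w, 0 < P w.
Hypothesis HP1 : \sum_(w : Omega) P w = 1.
Hypothesis Hret : forall s w (i : 'I_d), (1 <= s <= T)%N -> 0 < Ret s w 0 i.
Hypothesis Hiid : iid_returns Ret T P.
Hypothesis HA : is_DCAI Ret T alpha.
Hypothesis Hn : normalized Ret T alpha.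
Hypothesis Hrc : right_continuous Ret T alpha.
Variable x : R.
Hypothesis x0 : 0 < x.
Hypothesis Hstc : strongly_time_consistent Ret T (rho alpha x).
Hypothesis HI : condition_I Ret T P (one_step alpha x).

Local Notation rx := (rr R Omega alpha x).
Let cash := rr_cash _ _ _ _ _ _ HA Hn x x0.
Let local := rr_local _ _ _ _ _ _ HA x.
Let rmeas := rr_meas _ _ _ _ _ _ HA x.
Let acc := acc_iff _ _ _ _ _ _ HA Hn x x0 Hrc.
Let scl := rr_scale _ _ _ _ _ _ HA Hn x x0.
Let mono := rr_mono _ _ _ _ _ _ HA Hn x x0.
Let zero := rr_zero _ _ _ _ _ _ HA Hn x x0.
Let rhorr := rho_rr _ _ _ _ _ _ HA Hn x x0.

Definition ostep s (pi : 'rV[R]_d) : Omega -> R :=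
  fun w => \sum_(i < d) Ret s.+1 w 0 i * pi 0 i - 1.

Lemma ostep_meas s pi : meas Ret s.+1 (ostep s pi).
Proof. by move=> w w' E; rewrite /ostep (meas_Ret (isT : (0 < s.+1)%N) w w' E). Qed.

Lemma single_single (Z : Omega -> R) n : single_at (single_at Z n n) n = single_at Z n.
Proof.
apply/funext => u; apply/funext => v; rewrite /single_at.
by case: (u == n); rewrite ?eqxx.
Qed.

Lemma transfer s pi w w0 : (s < T)%N ->
  rx s (single_at (ostep s pi) s.+1) w = rx 0 (single_at (ostep 0 pi) 1) w0.
Proof.
move=> sT.
pose Zc := fun v => if atom Ret s w v then ostep s pi v else 0.
have HZc : meas Ret s.+1 Zc.
  exact: (meas_comp2 (fun (b : bool) r => if b then r else 0) (meas_mono (leqnSn s) meas_atom)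
    (ostep_meas s pi)).
have T0 : (0 < T)%N by apply: leq_ltn_trans sT.
have E1 : rx s (single_at (ostep s pi) s.+1) w = rx s (single_at Zc s.+1) w.
  apply: local; [exact: ltnW | exact: adapted_single (ostep_meas s pi) | exact: adapted_single HZc |].
  by move=> u v _ Av; rewrite /single_at /Zc Av.
rewrite E1 /rr.
pose f := fun r : 'rV[R]_d => \sum_(i < d) r 0 i * pi 0 i - 1.
have := HI s 0 w w0 (single_at Zc s.+1) (single_at (ostep 0 pi) 1) sT T0
  (adapted_single HZc) (adapted_single (ostep_meas 0 pi)) _ _ _ w w0 atom_refl atom0.
rewrite /one_step !single_single => -> //.
- by move=> v; rewrite /single_at eqxx /Zc => /negbTE ->.
- by move=> v; rewrite atom0.
move=> v.
have -> : (fun w' => atom Ret s w w' && (single_at Zc s.+1 s.+1 w' == v)) =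
    (fun w' => atom Ret s w w' && (f (Ret s.+1 w') == v)).
  by apply/funext => w'; rewrite /single_at eqxx /Zc; case: (atom Ret s w w').
have -> : (fun w' => atom Ret 0 w0 w' && (single_at (ostep 0 pi) 1 1 w' == v)) =
    (fun w' => atom Ret 0 w0 w' && (f (Ret 1 w') == v)).
  by apply/funext => w'; rewrite /single_at eqxx.
exact: (cond_dist _ _ _ _ _ _ HP1 Hiid HP s w w0 f v sT).
Qed.

Definition Div t V h s : @proc R Omega := fun u w =>
  if (s < u <= T)%N then wealth Ret t V h u w - wealth Ret t V h u.-1 w else 0.

Lemma Div_adapted t V h s : meas Ret t V -> admissible Ret T t V h -> (t <= s)%N ->
  adapted Ret T (Div t V h s).
Proof.
move=> HV Hadm ts u uT; rewrite /Div; case E: ((s < u <= T)%N); last exact: meas_const.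
move: E => /andP[su _].
have Hm := W_meas R Omega d T Ret t V h HV Hadm.
have tu : (t <= u)%N := leq_trans ts (ltnW su).
have su' : (s <= u.-1)%N by rewrite -ltnS prednK //; exact: leq_ltn_trans (leq0n s) su.
apply: (meas_comp2 (fun a b : R => a - b)); first by apply: Hm; rewrite tu uT.
apply: (meas_mono (leq_pred u)); apply: Hm; rewrite (leq_trans ts su') /=.
exact: leq_trans (leq_pred u) uT.
Qed.

Lemma Div_step t V h s : (s < T)%N -> Div t V h s =
  plus_at (Div t V h s.+1) (fun w => wealth Ret t V h s.+1 w - wealth Ret t V h s w) s.+1.
Proof.
move=> sT; apply/funext => u; apply/funext => v; rewrite /Div /plus_at.
case: (eqVneq u s.+1) => [->|us]; first by rewrite ltnSn sT ltnn /= add0r.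
rewrite addr0; congr (if _ then _ else _).
by rewrite (ltn_neqAle s.+1 u) eq_sym us.
Qed.

Lemma Div_T t V h : Div t V h T = (fun _ _ => 0).
Proof.
apply/funext => u; apply/funext => v; rewrite /Div.
by case: (ltnP T u).
Qed.

Definition G t V h s w := rx s (Div t V h s) w.

Lemma G_step t V h s w : meas Ret t V -> admissible Ret T t V h -> (t <= s)%N -> (s < T)%N ->
  G t V h s w = rx s (single_at (fun v => wealth Ret t V h s.+1 v - wealth Ret t V h s v
     - G t V h s.+1 v) s.+1) w.
Proof.
move=> HV Hadm ts sT.
set Z := fun v => _.
have Hm := W_meas R Omega d T Ret t V h HV Hadm.
have AD1 := Div_adapted t V h s.+1 HV Hadm (leqW ts).
have HZ : meas Ret s.+1 Z.
  apply: (meas_comp2 (fun a b : R => a - b)); last exact: rmeas.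
  apply: (meas_comp2 (fun a b : R => a - b)); first by apply: Hm; rewrite (leqW ts) sT.
  by apply: (meas_mono (leqnSn s)); apply: Hm; rewrite ts ltnW.
have AD := Div_adapted t V h s HV Hadm ts.
have AZ : adapted Ret T (single_at Z s.+1) := adapted_single HZ.
rewrite /G /rr (Hstc s (Div t V h s) (single_at Z s.+1) sT AD AZ) //.
  by move=> v; rewrite /Div /single_at ltnn /= (ltn_eqF (ltnSn s)).
move=> v; rewrite (rhorr s.+1 (Div t V h s) v sT AD) (rhorr s.+1 _ v sT AZ); congr EFin.
have Hm1 : meas Ret s.+1 (fun w => wealth Ret t V h s.+1 w - wealth Ret t V h s w).
  apply: (meas_comp2 (fun a b : R => a - b)); first by apply: Hm; rewrite (leqW ts) sT.
  by apply: (meas_mono (leqnSn s)); apply: Hm; rewrite ts ltnW.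
rewrite (Div_step t V h s sT) (cash s.+1 _ _ v sT AD1 Hm1).
have -> : single_at Z s.+1 = plus_at (fun _ _ => 0) Z s.+1.
  by apply/funext => u; apply/funext => v'; rewrite /single_at /plus_at add0r.
have A0 : adapted Ret T (fun (_ : nat) (_ : Omega) => 0 : R) by move=> u _; exact: meas_const.
rewrite (cash s.+1 _ _ v sT A0 HZ) (zero s.+1 v sT) /Z /G; lra.
Qed.

Lemma G_local t V h s w : meas Ret t V -> (forall w, 0 < V w) -> admissible Ret T t V h ->
  (t <= s)%N -> (s < T)%N ->
  rx s (single_at (fun v => wealth Ret t V h s.+1 v - wealth Ret t V h s v) s.+1) w =
  wealth Ret t V h s w *
    rx s (single_at (ostep s ((wealth Ret t V h s w)^-1 *: h s w)) s.+1) w.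
Proof.
move=> HV HVp Hadm ts sT.
have Hm := W_meas R Omega d T Ret t V h HV Hadm.
have c0 : 0 < wealth Ret t V h s w.
  by apply: (W_pos R Omega d T Ret Hret t V h HVp Hadm s); rewrite ts ltnW.
set c := wealth Ret t V h s w in c0 *.
have Hms : meas Ret s (wealth Ret t V h s) by apply: Hm; rewrite ts ltnW.
have Hm1 : meas Ret s.+1 (fun w => wealth Ret t V h s.+1 w - wealth Ret t V h s w).
  apply: (meas_comp2 (fun a b : R => a - b)); first by apply: Hm; rewrite (leqW ts) sT.
  exact: (meas_mono (leqnSn s)).
rewrite -(scl s _ c w c0 (ltnW sT) (adapted_single (ostep_meas _ _))).
apply: local; [exact: ltnW | exact: adapted_single Hm1 | |].
  by apply: adapted_scale; [exact: adapted_single (ostep_meas _ _) | move=> u; exact: meas_const].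
move=> u v _ Av; rewrite /single_at /scale; case: (u == s.+1); last by rewrite mulr0.
have [Hh _] := Hadm s (andP_intro _ _ ts sT).
rewrite /ostep (W_S R Omega d Ret t V h s v ts) (atom_meas Hh Av) (atom_meas Hms Av) -/c.
rewrite mulrBr mulr1 big_distrr /=; congr (_ - _); apply: eq_bigr => i _.
by rewrite mxE mulrCA mulVKf // gt_eqF.
Qed.

Lemma Wdiff_meas t V h s : meas Ret t V -> admissible Ret T t V h -> (t <= s)%N -> (s < T)%N ->
  meas Ret s.+1 (fun w => wealth Ret t V h s.+1 w - wealth Ret t V h s w).
Proof.
move=> HV Hadm ts sT; have Hm := W_meas R Omega d T Ret t V h HV Hadm.
apply: (meas_comp2 (fun a b : R => a - b)); first by apply: Hm; rewrite (leqW ts) sT.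
by apply: (meas_mono (leqnSn s)); apply: Hm; rewrite ts ltnW.
Qed.

Lemma Z_meas t V h s : meas Ret t V -> admissible Ret T t V h -> (t <= s)%N -> (s < T)%N ->
  meas Ret s.+1 (fun v => wealth Ret t V h s.+1 v - wealth Ret t V h s v - G t V h s.+1 v).
Proof.
move=> HV Hadm ts sT.
apply: (meas_comp2 (fun a b : R => a - b)); first exact: Wdiff_meas.
by apply: rmeas => //; apply: Div_adapted => //; exact: leqW.
Qed.

Lemma neg_dir t V h : meas Ret t V -> (forall w, 0 < V w) -> admissible Ret T t V h -> (t < T)%N ->
  (forall pi : 'rV[R]_d, (forall i, 0 <= pi 0 i) -> \sum_i pi 0 i = 1 ->
     exists w0, 0 < rx 0 (single_at (ostep 0 pi) 1) w0) ->
  forall w, 0 < G t V h t w.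
Proof.
move=> HV HVp Hadm tT Hneg.
have key : forall s, (t <= s)%N -> (s < T)%N -> (forall v, 0 <= G t V h s.+1 v) ->
    forall w, 0 < G t V h s w.
  move=> s ts sT Hge w; rewrite (G_step t V h s w HV Hadm ts sT).
  have Hm1 := Wdiff_meas t V h s HV Hadm ts sT.
  have HZ := Z_meas t V h s HV Hadm ts sT.
  apply: (lt_le_trans _ (mono s _ _ w (ltnW sT) (adapted_single Hm1) (adapted_single HZ) _)).
    rewrite (G_local t V h s w HV HVp Hadm ts sT).
    set pi := _ *: _.
    have [Hh [Hnn Hsum]] := Hadm s (andP_intro _ _ ts sT).
    have c0 : 0 < wealth Ret t V h s w.
      by apply: (W_pos R Omega d T Ret Hret t V h HVp Hadm s); rewrite ts ltnW.
    have [w0 Hw0] : exists w0, 0 < rx 0 (single_at (ostep 0 pi) 1) w0.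
      apply: Hneg.
        move=> i; rewrite mxE; apply: mulr_ge0; [rewrite invr_ge0; exact: ltW | exact: Hnn].
      rewrite /pi; under eq_bigr do rewrite mxE.
      by rewrite -big_distrr /= Hsum mulVf // gt_eqF.
    by rewrite (transfer s pi w w0 sT); exact: mulr_gt0.
  by move=> u v _; rewrite /single_at; case: (u == s.+1) => //; have := Hge v; lra.
have Hge0 : forall k s, (s + k = T)%N -> (t <= s)%N -> forall v, 0 <= G t V h s v.
  elim => [|k IH] s sk ts v.
    by rewrite addn0 in sk; rewrite /G sk Div_T (zero T v (leqnn T)).
  have sT : (s < T)%N by rewrite -sk addnS ltnS leq_addr.
  apply: ltW; apply: key => // v'; apply: IH; [by rewrite addSnnS | exact: leqW].
move=> w; apply: key => // v.
exact: (Hge0 (T - t.+1)%N t.+1 (subnKC tT) (leqnSn t) v).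
Qed.

Lemma const_strat t V (pi : 'rV[R]_d) : meas Ret t V -> (forall w, 0 < V w) ->
  (forall i, 0 <= pi 0 i) -> \sum_i pi 0 i = 1 ->
  exists h, admissible Ret T t V h /\
    forall s w, (t <= s)%N -> h s w = wealth Ret t V h s w *: pi.
Proof.
move=> HV HVp p0 p1.
pose Wc u w := V w * \prod_(t <= k < u) (\sum_(i < d) Ret k.+1 w 0 i * pi 0 i).
pose h := fun u w => Wc u w *: pi.
have WcE : forall k w, wealth Ret t V h (t + k)%N w = Wc (t + k)%N w.
  elim => [|k IH] w.
    by rewrite addn0 /wealth leqnn /Wc big_geq ?mulr1.
  rewrite addnS (W_S R Omega d Ret t V h (t + k)%N w (leq_addr k t)).
  rewrite /Wc big_nat_recr /= ?leq_addr // mulrA -/(Wc (t + k)%N w).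
  rewrite big_distrr /=; apply: eq_bigr => i _; rewrite /h mxE; ring.
have WcE' : forall s w, (t <= s)%N -> wealth Ret t V h s w = Wc s w.
  by move=> s w ts; rewrite -(subnKC ts) WcE.
have Wc_ge0 : forall s w, (s <= T)%N -> 0 <= Wc s w.
  move=> s w sT; apply: mulr_ge0; first exact: ltW.
  rewrite big_nat_cond; apply: prodr_ge0 => k /andP[/andP[_ ks] _]; apply: sumr_ge0 => i _; apply: mulr_ge0 (p0 i).
  by apply: ltW; apply: Hret; rewrite /= (leq_trans ks sT).
exists h; split; last by move=> s w ts; rewrite WcE'.
move=> s /andP[ts sT]; split; [|split].
- move=> w w' E; rewrite /h /Wc (meas_mono ts HV w w' E); congr (_ * _ *: _).
  by apply: eq_big_nat => k /andP[_ ks]; rewrite (E k.+1).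
- by move=> w i; rewrite /h mxE; apply: mulr_ge0 (p0 i); exact: Wc_ge0 (ltnW sT).
- move=> w; rewrite WcE' // /h; under eq_bigr do rewrite mxE.
  by rewrite -big_distrr /= p1 mulr1.
Qed.

Lemma pos_dir t V (pi : 'rV[R]_d) : meas Ret t V -> (forall w, 0 < V w) -> (t < T)%N ->
  (forall i, 0 <= pi 0 i) -> \sum_i pi 0 i = 1 ->
  (forall w0, rx 0 (single_at (ostep 0 pi) 1) w0 <= 0) ->
  exists h, admissible Ret T t V h /\
    forall w, (x%:E <= alpha t (dividends Ret T t V h) w)%E.
Proof.
move=> HV HVp tT p0 p1 Hr.
have [h [Hadm Hh]] := const_strat t V pi HV HVp p0 p1.
exists h; split => //.
have key : forall s, (t <= s)%N -> (s < T)%N -> (forall v, G t V h s.+1 v <= 0) ->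
    forall w, G t V h s w <= 0.
  move=> s ts sT Hle w; rewrite (G_step t V h s w HV Hadm ts sT).
  have Hm1 := Wdiff_meas t V h s HV Hadm ts sT.
  have HZ := Z_meas t V h s HV Hadm ts sT.
  apply: (le_trans (mono s _ _ w (ltnW sT) (adapted_single HZ) (adapted_single Hm1) _)).
    by move=> u v _; rewrite /single_at; case: (u == s.+1) => //; have := Hle v; lra.
  rewrite (G_local t V h s w HV HVp Hadm ts sT).
  have c0 : 0 < wealth Ret t V h s w.
    by apply: (W_pos R Omega d T Ret Hret t V h HVp Hadm s); rewrite ts ltnW.
  have -> : (wealth Ret t V h s w)^-1 *: h s w = pi.
    by rewrite Hh // scalerA mulVf ?scale1r // gt_eqF.
  rewrite (transfer s pi w w sT); apply: mulr_ge0_le0; [exact: ltW | exact: Hr].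
have Hge0 : forall k s, (s + k = T)%N -> (t <= s)%N -> forall v, G t V h s v <= 0.
  elim => [|k IH] s sk ts v.
    by rewrite addn0 in sk; rewrite /G sk Div_T (zero T v (leqnn T)).
  have sT : (s < T)%N by rewrite -sk addnS ltnS leq_addr.
  apply: key => // v'; apply: IH; [by rewrite addSnnS | exact: leqW].
move=> w; apply/(acc t (Div t V h t) w (ltnW tT) (Div_adapted t V h t HV Hadm (leqnn t))).
by apply: (Hge0 (T - t)%N); [rewrite subnKC // ltnW | exact: leqnn].
Qed.

Definition Qx := exists pi : 'rV[R]_d, (forall i, 0 <= pi 0 i) /\ \sum_i pi 0 i = 1 /\
  forall w0, rx 0 (single_at (ostep 0 pi) 1) w0 <= 0.

Lemma main_iff t V w : (t < T)%N -> meas Ret t V -> (forall w, 0 < V w) ->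
  ((exists h, admissible Ret T t V h /\ (x%:E <= alpha t (dividends Ret T t V h) w)%E) <-> Qx).
Proof.
move=> tT HV HVp; split.
  move=> [h [Hadm Hx]]; have [//|nQ] := boolp.pselect Qx.
  have Hneg : forall pi : 'rV[R]_d, (forall i, 0 <= pi 0 i) -> \sum_i pi 0 i = 1 ->
      exists w0, 0 < rx 0 (single_at (ostep 0 pi) 1) w0.
    move=> pi p0 p1; apply: boolp.contrapT => nex; apply: nQ; exists pi; split => //; split => //.
    by move=> w0; rewrite leNgt; apply/negP => H; apply: nex; exists w0.
  have := neg_dir t V h HV HVp Hadm tT Hneg w.
  have := (acc t (Div t V h t) w (ltnW tT) (Div_adapted t V h t HV Hadm (leqnn t))).1 Hx.
  by rewrite /G; move=> H1 H2; have := lt_le_trans H2 H1; rewrite ltxx.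
move=> [pi [p0 [p1 Hr]]]; have [h [Hadm Hh]] := pos_dir t V pi HV HVp tT p0 p1 Hr.
by exists h.
Qed.

End Main.

Theorem theorem3p2 (R : realType) (Omega : finType) (d T : nat)
    (P : Omega -> R) (Ret : nat -> Omega -> 'rV[R]_d)
    (alpha : nat -> proc -> Omega -> \bar R) :
  (forall w, 0 < P w) -> \sum_(w : Omega) P w = 1 ->
  (forall s w (i : 'I_d), (1 <= s <= T)%N -> 0 < Ret s w 0 i) ->
  iid_returns Ret T P ->
  is_DCAI Ret T alpha ->
  normalized Ret T alpha ->
  right_continuous Ret T alpha ->
  (forall x : R, 0 < x -> strongly_time_consistent Ret T (rho alpha x)) ->
  (forall x : R, 0 < x -> condition_I Ret T P (one_step alpha x)) ->
  forall (t : nat) (V : Omega -> R), (t < T)%N -> meas Ret t V ->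
    (forall w, 0 < V w) ->
    forall w w' : Omega,
      max_acc Ret T alpha t V w = max_acc Ret T alpha 0 (fun _ => 1) w'.
Proof.
move=> HP HP1 Hret Hiid HA Hn Hrc Hstc HI t V tT HV HVp w w'.
have key : forall t1 V1 w1 t2 V2 w2, (t1 < T)%N -> meas Ret t1 V1 -> (forall w, 0 < V1 w) ->
    (t2 < T)%N -> meas Ret t2 V2 -> (forall w, 0 < V2 w) ->
    (max_acc Ret T alpha t1 V1 w1 <= max_acc Ret T alpha t2 V2 w2)%E.
  move=> t1 V1 w1 t2 V2 w2 t1T HV1 HV1p t2T HV2 HV2p.
  rewrite /max_acc; apply: ge_ereal_sup => _ [h1 Hadm1 <-].
  set a := alpha t1 _ w1.
  set S2 := ([set alpha t2 (dividends Ret T t2 V2 h) w2 | h in [set h | admissible Ret T t2 V2 h]])%classic.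
  pose pi := (V1 w1)^-1 *: h1 t1 w1.
  have t1t1 : (t1 <= t1 < T)%N by rewrite leqnn t1T.
  have [_ [Hnn Hsum]] := Hadm1 t1 t1t1.
  have p0 : forall i, 0 <= pi 0 i.
    by move=> i; rewrite mxE; apply: mulr_ge0; [rewrite invr_ge0; exact: ltW | exact: Hnn].
  have p1 : \sum_i pi 0 i = 1.
    rewrite /pi; under eq_bigr do rewrite mxE.
    rewrite -big_distrr /= Hsum /wealth leqnn mulVf // gt_eqF //.
  have [h2 [Hadm2 _]] := const_strat R Omega d T Ret Hret t2 V2 pi HV2 HV2p p0 p1.
  have b0 : (0 <= alpha t2 (dividends Ret T t2 V2 h2) w2)%E.
    apply: (dcai_range HA) => //; first exact: ltnW.
    exact: (Div_adapted R Omega d T Ret t2 V2 h2 t2 HV2 Hadm2 (leqnn t2)).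
  have s2ge0 : (0 <= ereal_sup S2)%E.
    by apply: le_trans b0 _; apply: ereal_sup_ubound; exists h2.
  rewrite leNgt; apply/negP => Hlt.
  have [xx [xpos [Hxs Hxa]]] : exists xx : R, 0 < xx /\ (ereal_sup S2 < xx%:E)%E /\ (xx%:E <= a)%E.
    move: s2ge0 Hlt; case: (ereal_sup S2) => [r| |] //; try by move=> _; rewrite ltNge leey.
    rewrite lee_fin => r0; case: a => [ra| |] //.
      rewrite lte_fin => rra; exists ((r + ra) / 2); rewrite !lte_fin !lee_fin; split; [|split]; lra.
    by move=> _; exists (r + 1); rewrite lte_fin leey; split; [|split]; lra.
  have HQ := (main_iff R Omega d T P Ret alpha HP HP1 Hret Hiid HA Hn Hrc xx xpos
    (Hstc xx xpos) (HI xx xpos) t1 V1 w1 t1T HV1 HV1p).1 (ex_intro _ h1 (conj Hadm1 Hxa)).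
  have [h3 [Hadm3 Hx3]] := (main_iff R Omega d T P Ret alpha HP HP1 Hret Hiid HA Hn Hrc xx xpos
    (Hstc xx xpos) (HI xx xpos) t2 V2 w2 t2T HV2 HV2p).2 HQ.
  have : (alpha t2 (dividends Ret T t2 V2 h3) w2 <= ereal_sup S2)%E.
    by apply: ereal_sup_ubound; exists h3.
  by move=> /(le_trans Hx3) /(lt_le_trans Hxs); rewrite ltxx.
have T0 : (0 < T)%N by apply: leq_ltn_trans tT.
have H1 : meas Ret 0 (fun _ : Omega => 1 : R) by [].
have H1p : forall w : Omega, 0 < (1 : R) by move=> _; exact: ltr01.
apply/eqP; rewrite eq_le; apply/andP; split; exact: key.
Qed.
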